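(* There exists a $4\times 4$ Jacobi matrix $J$ that realizes perfect state transfer and has Early State Exclusion; i.e., if $T_0>0$ is the earliest time at which $J$ realizes perfect state transfer, then there is $t\in(0,T_0)$ with $(e^{-iJt}\mathbf{e}_0,\mathbf{e}_0)_{\mathbb{C}^{4}}=0$.
   Context: A Jacobi matrix of order $N+1$ is a real symmetric tridiagonal $(N+1)\times(N+1)$ matrix $J$ with diagonal entries $a_0,\dots,a_N\in\mathbb{R}$ and off-diagonal entries $b_0,\dots,b_{N-1}>0$. Let $\mathbf{e}_0,\dots,\mathbf{e}_N$ be the standard basis of $\mathbb{C}^{N+1}$. $J$ realizes perfect state transfer (PST) at time $T>0$ if $e^{-iTJ}\mathbf{e}_0=e^{i\phi}\mathbf{e}_N$ for some $\phi\in\mathbb{R}$. If $T_0$ is the earliest (smallest positive) such time, $J$ is said to have Early State Exclusion (ESE) at time $t$ if $0<t<T_0$ and $(e^{-iJt}\mathbf{e}_0,\mathbf{e}_0)_{\mathbb{C}^{N+1}}=0$. *)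

(* Defs.v *)
From HB Require Import structures.
From mathcomp Require Import all_boot all_order all_algebra.
From mathcomp Require Import all_classical all_reals all_analysis.
Set Implicit Arguments. Unset Strict Implicit. Unset Printing Implicit Defensive.
Import Order.TTheory GRing.Theory Num.Theory numFieldNormedType.Exports.
Local Open Scope ring_scope.

Definition jacobi (R : realType) (n : nat) (J : 'M[R]_n.+1) : Prop :=
  [/\ forall i j : 'I_n.+1, J i j = J j i,
      forall i j : 'I_n.+1, (i.+1 < j)%N -> J i j = 0
    & forall i j : 'I_n.+1, j = i.+1 :> nat -> 0 < J i j].

(* e^{-itJ} = sum_k (-it)^k J^k / k!, split into real and imaginary parts
   (J is real):
   Re = sum_m (-1)^m t^(2m) J^(2m) / (2m)!,
   Im = sum_m (-1)^(m+1) t^(2m+1) J^(2m+1) / (2m+1)!.  Entrywise series, as limits of partial sums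
   (these series converge for every t). *)
Definition evolRe (R : realType) (n : nat) (J : 'M[R]_n.+1) (t : R)
    (i j : 'I_n.+1) : R :=
  limn (fun N : nat => \sum_(m < N) (((-1) ^+ m * t ^+ (2 * m)%N / ((2 * m)%N`!)%:R) * (J ^+ (2 * m)%N) i j)).

Definition evolIm (R : realType) (n : nat) (J : 'M[R]_n.+1) (t : R)
    (i j : 'I_n.+1) : R :=
  limn (fun N : nat => \sum_(m < N) (((-1) ^+ m.+1 * t ^+ (2 * m)%N.+1 / ((2 * m)%N.+1`!)%:R)
                 * (J ^+ (2 * m)%N.+1) i j)).

(* Perfect state transfer at time T: e^{-iTJ} e_0 = e^{i phi} e_N. *)
Definition PST (R : realType) (n : nat) (J : 'M[R]_n.+1) (T : R) : Prop :=
  0 < T /\ exists phi : R, forall j : 'I_n.+1,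
    evolRe J T j ord0 = (if j == ord_max then cos phi else 0) /\
    evolIm J T j ord0 = (if j == ord_max then sin phi else 0).

Definition return_amp_zero (R : realType) (n : nat) (J : 'M[R]_n.+1) (t : R)
  : Prop := evolRe J t ord0 ord0 = 0 /\ evolIm J t ord0 ord0 = 0.

(* Main.v *)
Require Import Defs.
From HB Require Import structures.
From mathcomp Require Import all_boot all_order all_algebra.
From mathcomp Require Import all_classical all_reals all_analysis.
From mathcomp Require Import ring lra zify.
Import Order.TTheory GRing.Theory Num.Theory.
Import numFieldNormedType.Exports.
Local Open Scope classical_set_scope.
Local Open Scope ring_scope.

Section S.
Variable R : realType.
Let s : R := Num.sqrt 15.
Lemma s2 : s ^+ 2 = 15. Proof. by rewrite sqr_sqrtr // ler0n. Qed.
Lemma s_gt0 : 0 < s. Proof. by rewrite sqrtr_gt0 ltr0n. Qed.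

Definition jf (i j : nat) : R :=
  if (i == j.+1) || (j == i.+1) then (if (i + j == 3)%N then 2 else s) else 0.
Definition Jm : 'M[R]_4 := \matrix_(i, j) jf i j.

Definition ae (j : nat) : R := match j with 0 => 5/8 | 2 => - s / 8 | _ => 0 end.
Definition be (j : nat) : R := match j with 0 => 3/8 | 2 => s / 8 | _ => 0 end.
Definition ao (j : nat) : R := match j with 1 => s/8 | 3 => - (5/8) | _ => 0 end.
Definition bo (j : nat) : R := match j with 1 => s/8 | 3 => 3/8 | _ => 0 end.

Lemma powJ m :
  (forall j : 'I_4, (Jm ^+ (2 * m)%N) j ord0 = ae j * (3 ^+ 2) ^+ m + be j * (5 ^+ 2) ^+ m) /\
  (forall j : 'I_4, (Jm ^+ (2 * m)%N.+1) j ord0 = ao j * (3 * (3 ^+ 2) ^+ m) + bo j * (5 * (5 ^+ 2) ^+ m)).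
Proof.
have s2' := s2.
elim: m => [|m [IHe IHo]].
  split => j.
    by rewrite (_ : (2 * 0 = 0)%N) // expr0 mxE; case: j => [[|[|[|[|j]]]] Hj] //=; rewrite /ae /be /=; field.
  by rewrite [X in Jm ^+ X](_ : _ = 1%N) // expr1 mxE; case: j => [[|[|[|[|j]]]] Hj] //=; rewrite /jf /ao /bo /=; field.
have e : (2 * m.+1 = (2 * m)%N.+2)%N by rewrite mulnS.
have Ho : forall j : 'I_4, (Jm ^+ (2 * m)%N.+1) j ord0 = ao j * (3 * (3 ^+ 2) ^+ m) + bo j * (5 * (5 ^+ 2) ^+ m) := IHo.
have He : forall j : 'I_4, (Jm ^+ (2 * m)%N.+2) j ord0 = ae j * (3 ^+ 2) ^+ m.+1 + be j * (5 ^+ 2) ^+ m.+1.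
  move=> j; rewrite exprS -mulmxE mxE !big_ord_recl big_ord0 !IHo !mxE.
  case: j => [[|[|[|[|j]]]] Hj] //=; rewrite /jf /ae /be /ao /bo /= !(exprS (3 ^+ 2)) !(exprS (5 ^+ 2)); set X := (3 ^+ 2) ^+ m; set Y := (5 ^+ 2) ^+ m; clearbody X Y; by field: s2'.
rewrite e; split => // j.
rewrite exprS -mulmxE mxE !big_ord_recl big_ord0 !He !mxE.
case: j => [[|[|[|[|j]]]] Hj] //=; rewrite /jf /ae /be /ao /bo /= !(exprS (3 ^+ 2)) !(exprS (5 ^+ 2)); set X := (3 ^+ 2) ^+ m; set Y := (5 ^+ 2) ^+ m; clearbody X Y; by field: s2'.
Qed.

Lemma lim2 (f g h : nat -> R) (al be x y : R) : g @ \oo --> x -> h @ \oo --> y ->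
  (forall N, f N = al * g N + be * h N) -> limn f = al * x + be * y.
Proof.
move=> gx hy fE; have -> : f = (fun N => al * g N + be * h N) by apply/funext.
apply: cvg_lim => //; apply: cvgD; exact: cvgMl_tmp.
Qed.

Lemma cvg_cosser (a t : R) : (fun N => \sum_(m < N) (((-1) ^+ m * t ^+ (2 * m)%N / ((2 * m)%N`!)%:R) * (a ^+ 2) ^+ m)) @ \oo --> cos (a * t).
Proof.
have -> : (fun N => \sum_(m < N) (((-1) ^+ m * t ^+ (2 * m)%N / ((2 * m)%N`!)%:R) * (a ^+ 2) ^+ m)) = series (cos_coeff' (a * t)).
  apply/funext => N; rewrite seriesEord /=; apply: eq_bigr => m _.
  rewrite /cos_coeff' -mul2n [(a * t) ^+ _]exprMn -exprM -exprnP; ring.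
exact: cvg_cos_coeff'.
Qed.

Lemma cvg_sinser (a t : R) : (fun N => \sum_(m < N) (((-1) ^+ m.+1 * t ^+ (2 * m)%N.+1 / ((2 * m)%N.+1`!)%:R) * (a * (a ^+ 2) ^+ m))) @ \oo --> - sin (a * t).
Proof.
have -> : (fun N => \sum_(m < N) (((-1) ^+ m.+1 * t ^+ (2 * m)%N.+1 / ((2 * m)%N.+1`!)%:R) * (a * (a ^+ 2) ^+ m))) = - series (sin_coeff' (a * t)).
  apply/funext => N; transitivity (- (series (sin_coeff' (a * t)) N)); last by []. rewrite seriesEord /= -sumrN; apply: eq_bigr => m _.
  rewrite /sin_coeff' -mul2n [(a * t) ^+ _]exprMn -exprnP -exprM [a ^+ (2 * m).+1]exprS [(-1) ^+ m.+1]exprS; ring.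
apply: cvgN; exact: cvg_sin_coeff'.
Qed.

Lemma evolRe_eq t (j : 'I_4) : evolRe Jm t j ord0 = ae j * cos (3 * t) + be j * cos (5 * t).
Proof.
rewrite /evolRe; apply: lim2; [exact: cvg_cosser | exact: cvg_cosser | move=> N].
rewrite !mulr_sumr -big_split /=; apply: eq_bigr => m _; rewrite (powJ m).1; ring.
Qed.

Lemma evolIm_eq t (j : 'I_4) : evolIm Jm t j ord0 = ao j * (- sin (3 * t)) + bo j * (- sin (5 * t)).
Proof.
rewrite /evolIm; apply: lim2; [exact: cvg_sinser | exact: cvg_sinser | move=> N].
rewrite !mulr_sumr -big_split /=; apply: eq_bigr => m _; rewrite (powJ m).2; ring.
Qed.

Lemma jacobiJ : jacobi Jm.
Proof.
split.
- by move=> i j; rewrite !mxE /jf orbC addnC.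
- move=> i j h; rewrite mxE /jf; case: ifP => // /orP [/eqP e|/eqP e]; lia.
- move=> i j e; rewrite mxE /jf e eqxx orbT; case: ifP => _; last exact: s_gt0.
  by rewrite ltr0n.
Qed.

Lemma cos3 : cos (3 * (pi / 2)) = 0 :> R.
Proof. by rewrite (_ : 3 * (pi / 2) = pi / 2 + pi) ?cosDpi ?cos_pihalf ?oppr0 //; field. Qed.
Lemma sin3 : sin (3 * (pi / 2)) = -1 :> R.
Proof. by rewrite (_ : 3 * (pi / 2) = pi / 2 + pi) ?sinDpi ?sin_pihalf //; field. Qed.
Lemma cos5 : cos (5 * (pi / 2)) = 0 :> R.
Proof. by rewrite (_ : 5 * (pi / 2) = pi / 2 + pi *+ 2) ?cosD2pi ?cos_pihalf //; rewrite mulr2n; field. Qed.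
Lemma sin5 : sin (5 * (pi / 2)) = 1 :> R.
Proof. by rewrite (_ : 5 * (pi / 2) = pi / 2 + pi *+ 2) ?sinD2pi ?sin_pihalf //; rewrite mulr2n; field. Qed.

Lemma PSTJ : PST Jm (pi / 2).
Proof.
split; first by have := @pi_gt0 R; lra.
exists (- (pi / 2)) => j.
rewrite evolRe_eq evolIm_eq cos3 sin3 cos5 sin5 cosN sinN cos_pihalf sin_pihalf.
case: j => [[|[|[|[|j]]]] Hj] //=; rewrite /ae /be /ao /bo /=; by split; field.
Qed.

Lemma cosS x y : cos (x + y) = 2 * cos x * cos y - cos (x - y) :> R.
Proof. rewrite cosD cosB; ring. Qed.

Lemma minJ T : PST Jm T -> pi / 2 <= T.
Proof.
move=> [T0 [phi H]]; rewrite leNgt; apply/negP => hT.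
have [h0 _] := H ord0.
have [_ h1] := H (@Ordinal 4 1 isT).
have [h2 _] := H (@Ordinal 4 2 isT).
rewrite evolRe_eq /= /ae /be /= in h0.
rewrite evolRe_eq /= /ae /be /= in h2.
rewrite evolIm_eq /= /ao /bo /= in h1.
have sn0 : s / 8 != 0 by rewrite mulf_neq0 // ?invr_eq0 ?gt_eqF ?s_gt0.
have e1 : cos (5 * T) = cos (3 * T).
  have : s / 8 * (cos (5 * T) - cos (3 * T)) = 0 by rewrite -h2; ring.
  by move/eqP; rewrite mulf_eq0 (negbTE sn0) /= subr_eq0 => /eqP.
have e2 : sin (5 * T) = - sin (3 * T).
  have : s / 8 * (sin (5 * T) + sin (3 * T)) = 0 by rewrite -oppr0 -h1; ring.
  by move/eqP; rewrite mulf_eq0 (negbTE sn0) /= addr_eq0 => /eqP.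
have c30 : cos (3 * T) = 0 by move: h0; rewrite e1; lra.
have c2 : cos (T + T) = -1.
  rewrite (_ : T + T = 5 * T - 3 * T); last by ring.
  rewrite cosB e1 e2 c30; have := sin2cos2 (3 * T); rewrite c30; lra.
have cT : 0 < cos T by apply: cos_gt0_pihalf; have := @pi_gt0 R; lra.
move: c2; rewrite cosD -[sin T * sin T]expr2 sin2cos2 -expr2 => c2.
have : cos T ^+ 2 = 0 by lra.
by move/eqP; rewrite sqrf_eq0 gt_eqF.
Qed.

Lemma eseJ : exists t : R, 0 < t < pi / 2 /\ return_amp_zero Jm t.
Proof.
set c : R := Num.sqrt (5 / 6).
have c2 : c ^+ 2 = 5 / 6 by rewrite sqr_sqrtr // divr_ge0.
have c0 : 0 < c by rewrite sqrtr_gt0 divr_gt0.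
have c1 : c < 1 by rewrite -sqrtr1 ltr_sqrt //; lra.
have cin : c \in `[-1, 1] by rewrite in_itv /=; apply/andP; split; lra.
exists (acos c); split.
  apply/andP; split; first by apply: acos_gt0; apply/andP; split; lra.
  rewrite ltNge; apply/negP => ht.
  have tle : acos c <= pi by apply: acos_lepi; apply/andP; split; lra.
  have := cosDpi (acos c - pi); rewrite subrK acosK // => e.
  have : 0 <= cos (acos c - pi) by apply: cos_ge0_pihalf; apply/andP; split; lra.
  lra.
set t := acos c.
have ct : cos t = c by rewrite /t acosK.
have C2 : cos (2 * t) = 2 * c ^+ 2 - 1.
  rewrite (_ : 2 * t = t + t); last by ring.
  by rewrite cosS subrr cos0 ct; ring.
have C3 : cos (3 * t) = 2 * cos (2 * t) * c - c.
  rewrite (_ : 3 * t = 2 * t + t); last by ring.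
  by rewrite cosS (_ : 2 * t - t = t) ?ct //; ring.
have C4 : cos (4 * t) = 2 * cos (3 * t) * c - cos (2 * t).
  rewrite (_ : 4 * t = 3 * t + t); last by ring.
  by rewrite cosS (_ : 3 * t - t = 2 * t) ?ct //; ring.
have C5 : cos (5 * t) = 2 * cos (4 * t) * c - cos (3 * t).
  rewrite (_ : 5 * t = 4 * t + t); last by ring.
  by rewrite cosS (_ : 4 * t - t = 3 * t) ?ct //; ring.
split.
  rewrite evolRe_eq /= /ae /be /= C5 C4 C3 C2.
  transitivity (c ^+ 3 * (6 * c ^+ 2 - 5)); first by field.
  by rewrite c2; field.
by rewrite evolIm_eq /= /ao /bo /= !mul0r addr0.
Qed.
End S.

Theorem mainTheorem2 (R : realType) :
  exists (J : 'M[R]_4) (T0 t : R),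
    [/\ jacobi J,
        PST J T0,
        (forall T : R, PST J T -> T0 <= T),
        0 < t < T0
      & return_amp_zero J t].
Proof.
have [t [ht hz]] := eseJ R.
exists (Jm R), (pi / 2), t; split => //.
- exact: jacobiJ.
- exact: PSTJ.
- exact: minJ.
Qed.
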